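(* Let $S$ be a multiplicatively closed subset of $R$, $I$ an ideal of $R$, and $M$ an $R$-module. (a) If $S^{-1}I\subseteq W_{S^{-1}R}(S^{-1}M)$, then $I\subseteq W_R(M)$. (b) If $Z_R(M)\cap S=\emptyset$, $W_R(M)\cap S=\emptyset$, and $I\subseteq W_R(M)$, then $S^{-1}I\subseteq W_{S^{-1}R}(S^{-1}M)$. (c) If $M$ is Hopfian, $W_R(M)\cap S=\emptyset$, and $I\subseteq W_R(M)$, then $S^{-1}I\subseteq W_{S^{-1}R}(S^{-1}M)$.
   Context: All rings are commutative with identity. For an $R$-module $M$, $W_R(M)=\{r\in R : rM\neq M\}$ and $Z_R(M)=\{r\in R: rm=0 \text{ for some } 0\neq m\in M\}$. $M$ is Hopfian if every surjective endomorphism of $M$ is an isomorphism. *)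

(* Defs.v *)
From HB Require Import structures.
From mathcomp Require Import all_boot all_algebra.
From mathcomp Require Import generic_quotient.
From mathcomp Require Import boolp.
From mathcomp Require Import ring.

Set Implicit Arguments.
Unset Strict Implicit.
Unset Printing Implicit Defensive.

Import GRing.Theory.
Local Open Scope ring_scope.
Local Open Scope quotient_scope.

Record mcset (R : comPzRingType) := MCSet {
  mc_mem : pred R;
  mc1 : mc_mem 1;
  mcM : forall x y, mc_mem x -> mc_mem y -> mc_mem (x * y) }.

Definition is_ideal (R : comPzRingType) (I : pred R) : Prop :=
  [/\ I 0, (forall x y, I x -> I y -> I (x + y)) & (forall r x, I x -> I (r * x))].

Definition W_ (R : comPzRingType) (M : lmodType R) (r : R) : Prop :=
  ~ (forall m : M, exists n : M, r *: n = m).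

Definition Z_ (R : comPzRingType) (M : lmodType R) (r : R) : Prop :=
  exists m : M, m <> 0 /\ r *: m = 0.

Definition hopfian (R : comPzRingType) (M : lmodType R) : Prop :=
  forall f : {linear M -> M}, (forall y, exists x, f x = y) -> injective f.

(** ** Localization S^{-1}M of an R-module M, as the quotient of M x S by
    (m,s) ~ (n,t) <-> exists u in S, u (t m - s n) = 0. *)
Definition den (R : comPzRingType) (S : mcset R) := {s : R | mc_mem S s}.

Definition den1 (R : comPzRingType) (S : mcset R) : den S := exist _ 1 (mc1 S).
Definition denM (R : comPzRingType) (S : mcset R) (s t : den S) : den S :=
  exist _ (val s * val t) (mcM (valP s) (valP t)).

Definition locrel (R : comPzRingType) (S : mcset R) (M : lmodType R)
  (x y : M * den S) : bool :=
  `[< exists u : den S, val u *: (val y.2 *: x.1 - val x.2 *: y.1) = 0 >].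

Lemma locrel_equiv (R : comPzRingType) (S : mcset R) (M : lmodType R) :
  equiv_class_of (@locrel R S M).
Proof.
split.
- move=> x; apply/asboolP; exists (den1 S); by rewrite subrr scaler0.
- move=> x y; apply/asboolP/asboolP => -[u Hu]; exists u;
    by rewrite -opprB scalerN Hu oppr0.
- move=> y x z /asboolP [u Hu] /asboolP [v Hv]; apply/asboolP.
  exists (denM (denM u v) y.2) => /=.
  move: Hu Hv; rewrite !scalerBr !scalerA => /eqP; rewrite subr_eq0 => /eqP Hu.
  move=> /eqP; rewrite subr_eq0 => /eqP Hv.
  apply/eqP; rewrite subr_eq0; apply/eqP.
  have E1 : (val u * val v * val y.2 * val z.2) *: x.1 =
            (val v * val z.2) *: ((val u * val y.2) *: x.1).
    by rewrite scalerA; congr (_ *: _); ring.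
  have E2 : (val u * val v * val y.2 * val x.2) *: z.1 =
            (val u * val x.2) *: ((val v * val y.2) *: z.1).
    by rewrite scalerA; congr (_ *: _); ring.
  rewrite E1 E2 Hu -Hv !scalerA; congr (_ *: _); ring.
Qed.

Canonical locrel_equivrel (R : comPzRingType) (S : mcset R) (M : lmodType R) :=
  EquivRelPack (@locrel_equiv R S M).

Definition Loc (R : comPzRingType) (S : mcset R) (M : lmodType R) :=
  {eq_quot (@locrel R S M)}.

Definition frac (R : comPzRingType) (S : mcset R) (M : lmodType R)
  (m : M) (s : den S) : Loc S M := \pi_(Loc S M) (m, s).

Definition LocR (R : comPzRingType) (S : mcset R) := Loc S R^o.

(** the scalar action of S^{-1}R on S^{-1}M : (a/s)(m/t) = (a m)/(s t) *)
Definition locact (R : comPzRingType) (S : mcset R) (M : lmodType R)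
  (r : LocR S) (x : Loc S M) : Loc S M :=
  let: (a, s) := repr r in let: (m, t) := repr x in
  frac ((a : R) *: m) (denM s t).

Definition locW (R : comPzRingType) (S : mcset R) (M : lmodType R)
  (r : LocR S) : Prop :=
  ~ (forall y : Loc S M, exists x : Loc S M, locact r x = y).

Definition locI (R : comPzRingType) (S : mcset R) (I : pred R)
  (r : LocR S) : Prop :=
  exists (a : R) (s : den S), I a /\ r = frac (a : R^o) s.

(* Main.v *)
Require Import Defs.
From mathcomp Require Import all_boot all_algebra.
From mathcomp Require Import generic_quotient boolp ring.

Set Implicit Arguments.
Unset Strict Implicit.
Unset Printing Implicit Defensive.
Import GRing.Theory.
Local Open Scope ring_scope.
Local Open Scope quotient_scope.

Local Notation fr := Defs.frac.
Lemma fracK (R : comPzRingType) (S : mcset R) (M : lmodType R) (x : Loc S M) : x = fr (repr x).1 (repr x).2.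
Proof. by rewrite /Defs.frac -surjective_pairing reprK. Qed.

Lemma frac_eqP (R : comPzRingType) (S : mcset R) (M : lmodType R) (m n : M) (s t : den S) :
  fr m s = fr n t <-> exists u : den S, val u *: (val t *: m - val s *: n) = 0.
Proof.
rewrite /Defs.frac; split.
- move/eqquotP => /asboolP [u Hu]; by exists u.
- move=> [u Hu]; apply/eqquotP/asboolP; by exists u.
Qed.

Section L.
Variables (R : comPzRingType) (S : mcset R) (M : lmodType R).



Lemma locactE (a : R) (s : den S) (m : M) (t : den S) :
  locact (fr (a : R^o) s) (fr m t) = fr (a *: m) (denM s t).
Proof.
rewrite /locact.
case E1: (repr (fr (a : R^o) s)) => [a' s'].
case E2: (repr (fr m t)) => [m' t'].
have H1 : fr (a : R^o) s = fr a' s' by rewrite (@fracK R S R^o (fr (a : R^o) s)) E1.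
have H2 : fr m t = fr m' t' by rewrite (fracK (fr m t)) E2.
move/(@frac_eqP R S R^o): H1 => [u Hu]; move/frac_eqP: H2 => [v Hv].
symmetry; apply/frac_eqP; exists (denM u v) => /=.
have Hu0 : val u * (val s' * a - val s * (a' : R)) = 0 by exact: Hu.
have Hu' : val u * val s' * a = val u * val s * a'.
  by apply/eqP; rewrite -subr_eq0 -Hu0; apply/eqP; ring.
have Hv' : (val v * val t') *: m = (val v * val t) *: m'.
  by apply/eqP; rewrite -subr_eq0 -!scalerA -scalerBr Hv.
have E : (val u * val v) *: ((val s' * val t') *: (a *: m)) =
         (val u * val s' * a) *: ((val v * val t') *: m).
  by rewrite !scalerA; congr (_ *: _); ring.
rewrite scalerBr E Hv' Hu' !scalerA; apply/eqP; rewrite subr_eq0; apply/eqP; congr (_ *: _).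
have HH : forall x1 x2 x3 x4 x5 : R, x1*x2*x3*(x4*x5) = x1*x4*(x2*x5*x3) by move=> *; ring.
exact: HH.
Qed.

End L.

Theorem lemma2p9 (R : comPzRingType) (S : mcset R) (I : pred R)
    (M : lmodType R) (HI : is_ideal I) :
  [/\
   (* (a) S^{-1}I ⊆ W_{S^{-1}R}(S^{-1}M)  ->  I ⊆ W_R(M) *)
   ((forall r : LocR S, locI I r -> locW M r) ->
      forall a : R, I a -> W_ M a),
   (* (b) *)
   ((forall a : R, Z_ M a -> ~ mc_mem S a) ->
    (forall a : R, W_ M a -> ~ mc_mem S a) ->
    (forall a : R, I a -> W_ M a) ->
      forall r : LocR S, locI I r -> locW M r)
  & (* (c) *)
   (hopfian M ->
    (forall a : R, W_ M a -> ~ mc_mem S a) ->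
    (forall a : R, I a -> W_ M a) ->
      forall r : LocR S, locI I r -> locW M r)].
Proof.
have key : forall (a : R) (s : den S), 
  (forall y : Loc S M, exists x : Loc S M, locact (fr (a : R^o) s) x = y) ->
  forall m : M, exists (v : den S) (n : M), val v *: m = a *: n.
  move=> a s Hs m; have [x Hx] := Hs (fr m (den1 S)).
  rewrite (fracK x) locactE in Hx.
  move/frac_eqP: Hx => [u Hu]; move: Hu => /=.
  rewrite scalerBr !scalerA mul1r => /eqP; rewrite subr_eq0 => /eqP Hu.
  exists (denM u (denM s (repr x).2)), (val u *: (repr x).1) => /=.
  by rewrite -Hu scalerA mulrC.
split.
- move=> H a Ia Hs.
  apply: (H (fr (a : R^o) (den1 S))); first by exists a, (den1 S).
  move=> y; rewrite (fracK y).
  have [n Hn] := Hs (repr y).1.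
  exists (fr n (repr y).2); rewrite locactE; apply/frac_eqP.
  exists (den1 S) => /=; by rewrite Hn !scale1r mul1r subrr.
- move=> HZ HW HIW r [a [s [Ia ->]]] Hsur.
  apply: (HIW a Ia) => m.
  have [v [n Hvn]] := key a s Hsur m.
  have Hv : forall m, exists n : M, val v *: n = m.
    apply: contrapT => nW; exact: (HW _ nW (valP v)).
  have [n' Hn'] := Hv n.
  exists n'; apply/eqP; rewrite -subr_eq0; apply/eqP; apply: contrapT => Hne.
  apply: (HZ (val v)) (valP v); exists (a *: n' - m); split => //.
  by rewrite scalerBr Hvn -Hn' !scalerA mulrC subrr.
- move=> Hh HW HIW r [a [s [Ia ->]]] Hsur.
  apply: (HIW a Ia) => m.
  have [v [n Hvn]] := key a s Hsur m.
  have Hv : forall m, exists n : M, val v *: n = m.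
    apply: contrapT => nW; exact: (HW _ nW (valP v)).
  have [n' Hn'] := Hv n.
  exists n'.
  have inj := Hh (val v \*: (@idfun M)) Hv.
  apply: inj => /=.
  by rewrite Hvn -Hn' !scalerA mulrC.
Qed.
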